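(* Let $p,q$ be distinct odd primes, and let $C$, $E'$ be as defined in the context, with $C'=C\cap E'$. If $C=C'$, then $p<q$.
   Context: $\zeta_p=e^{2i\pi/p}$, $E=\mathbb{Z}[\zeta_p,1/p]^*=\{u(1-\zeta_p)^k: u\in\mathbb{Z}[\zeta_p]^*,k\in\mathbb{Z}\}$. $C=\{u\in E: u=\frac{1-\zeta_p^i}{1-\zeta_p^j}\,\omega\,(1-\zeta_p)^k$, $\omega$ a root of unity, $i,j\in\mathbb{N}$ (with the quotient defined), $k\in\mathbb{Z}\}$ (the cyclotomic $p$-units). Let $H=\{\alpha\in\mathbb{Q}(\zeta_p)^*: v_{\mathfrak r}(\alpha)\equiv0\pmod q$ for every prime ideal $\mathfrak r\neq(1-\zeta_p)$ of $\mathbb{Z}[\zeta_p]\}/\mathbb{Q}(\zeta_p)^{*q}$, $H'=\{[\alpha]\in H: \alpha=\beta^q+q^2\gamma$ with $\beta,\gamma\in\mathbb{Z}[\zeta_p,1/p]$, $\beta$ invertible modulo $q^2\mathbb{Z}[\zeta_p,1/p]\}$, and $E'=\{u\in E: [u]\in H'\}$. *)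

(* Defs.v *)
From mathcomp Require Import all_boot all_order all_algebra all_field.
Set Implicit Arguments. Unset Strict Implicit. Unset Printing Implicit Defensive.
Import Order.TTheory GRing.Theory Num.Theory.
Local Open Scope ring_scope.

(* zeta_p = e^{2 i pi / p}: p.-root (-1) is the p-th root of -1 with minimal
   nonnegative argument, i.e. e^{i pi / p}; its square is e^{2 i pi / p}. *)
Definition zeta (p : nat) : algC := (p.-root (-1)) ^+ 2.

Definition inQzeta (p : nat) (x : algC) : Prop :=
  exists P : {poly rat}, x = (map_poly ratr P).[zeta p].

Definition inZzp (p : nat) (x : algC) : Prop :=
  exists (k : nat) (P : {poly int}), x * (p%:R) ^+ k = (map_poly intr P).[zeta p].

Definition inE (p : nat) (u : algC) : Prop :=
  inZzp p u /\ exists v, inZzp p v /\ u * v = 1.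

Definition inC (p : nat) (u : algC) : Prop :=
  inE p u /\
  exists (i j : nat) (w : algC) (k : int),
    (1 - zeta p ^+ j != 0) /\
    (exists n : nat, (0 < n)%N /\ w ^+ n = 1) /\
    u = (1 - zeta p ^+ i) / (1 - zeta p ^+ j) * w * (1 - zeta p) ^ k.

Definition inv_mod_q2 (p q : nat) (b : algC) : Prop :=
  exists d e, inZzp p d /\ inZzp p e /\ b * d = 1 + (q%:R) ^+ 2 * e.

(* E' = { u in E : [u] in H' }.  The class [u] in H (mod Q(zeta_p)^{*q}) is
   [alpha] for alpha = u * x^q, x in Q(zeta_p)^*; such alpha automatically has
   all valuations away from (1 - zeta_p) divisible by q, so [u] in H' iff some
   such representative alpha = beta^q + q^2 gamma with beta, gamma in
   Z[zeta_p,1/p] and beta invertible modulo q^2 Z[zeta_p,1/p]. *)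
Definition inE' (p q : nat) (u : algC) : Prop :=
  inE p u /\
  exists x b g, inQzeta p x /\ x != 0 /\ inZzp p b /\ inZzp p g /\
    inv_mod_q2 p q b /\
    u * x ^+ q = b ^+ q + (q%:R) ^+ 2 * g.

(* Main.v *)
Require Import Defs.
From mathcomp Require Import all_boot all_order all_algebra all_field.
From mathcomp Require Import ring cyclic.
Set Implicit Arguments. Unset Strict Implicit. Unset Printing Implicit Defensive.
Import Order.TTheory GRing.Theory Num.Theory.
Local Open Scope ring_scope.


Definition ev (p : nat) (P : {poly int}) : algC := (map_poly intr P).[zeta p].

Lemma evD p P Q : ev p (P + Q) = ev p P + ev p Q.
Proof. by rewrite /ev rmorphD hornerD. Qed.
Lemma evM p P Q : ev p (P * Q) = ev p P * ev p Q.
Proof. by rewrite /ev rmorphM hornerM. Qed.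
Lemma evN p P : ev p (- P) = - ev p P.
Proof. by rewrite /ev rmorphN hornerN. Qed.
Lemma evC p (c : int) : ev p c%:P = c%:~R.
Proof. by rewrite /ev map_polyC hornerC. Qed.
Lemma evX p : ev p 'X = zeta p.
Proof. by rewrite /ev map_polyX hornerX. Qed.

Lemma Zz_ev p P : inZzp p (ev p P).
Proof. by exists 0%N, P; rewrite expr0 mulr1. Qed.

Lemma ZzD p x y : inZzp p x -> inZzp p y -> inZzp p (x + y).
Proof.
move=> [k [P hP]] [l [Q hQ]]; exists (k + l)%N.
exists (P * ((p%:R : int) ^+ l)%:P + Q * ((p%:R : int) ^+ k)%:P).
change (x * p%:R ^+ k = ev p P) in hP; change (y * p%:R ^+ l = ev p Q) in hQ.
change ((x + y) * p%:R ^+ (k + l) = ev p (P * ((p%:R : int) ^+ l)%:P + Q * ((p%:R : int) ^+ k)%:P)).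
rewrite evD !evM !evC -hP -hQ.
rewrite !rmorphXn /= !pmulrn !intz (addnC k) exprD mulrDl; congr (_ + _).
  by rewrite [_ ^+ l * _]mulrC mulrA.
by rewrite mulrA.
Qed.

Lemma ZzM p x y : inZzp p x -> inZzp p y -> inZzp p (x * y).
Proof.
move=> [k [P hP]] [l [Q hQ]]; exists (k + l)%N, (P * Q).
change (x * p%:R ^+ k = ev p P) in hP; change (y * p%:R ^+ l = ev p Q) in hQ.
change ((x * y) * p%:R ^+ (k + l) = ev p (P * Q)).
rewrite evM -hP -hQ exprD.
by rewrite mulrACA.
Qed.

Lemma Zz_int p (c : int) : inZzp p c%:~R.
Proof. by rewrite -(evC p); apply: Zz_ev. Qed.
Lemma Zz_nat p (n : nat) : inZzp p n%:R.
Proof. by have := Zz_int p n. Qed.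
Lemma Zz0 p : inZzp p 0. Proof. exact: (Zz_nat p 0). Qed.
Lemma Zz1 p : inZzp p 1. Proof. exact: (Zz_nat p 1). Qed.
Lemma Zzz p : inZzp p (zeta p). Proof. by rewrite -(evX p); apply: Zz_ev. Qed.

Lemma ZzN p x : inZzp p x -> inZzp p (- x).
Proof. by move=> hx; rewrite -mulN1r; apply: ZzM => //; apply: (Zz_int p (-1)). Qed.
Lemma ZzB p x y : inZzp p x -> inZzp p y -> inZzp p (x - y).
Proof. by move=> hx hy; apply: ZzD => //; apply: ZzN. Qed.
Lemma ZzX p x n : inZzp p x -> inZzp p (x ^+ n).
Proof. by move=> hx; elim: n => [|n IH]; [rewrite expr0; apply: Zz1 | rewrite exprS; apply: ZzM]. Qed.
Lemma Zz_sum p (I : finType) (F : I -> algC) : (forall i, inZzp p (F i)) -> inZzp p (\sum_i F i).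
Proof. by move=> hF; apply: (big_ind (inZzp p)) => //; [apply: Zz0 | move=> x y; apply: ZzD]. Qed.
Lemma Zz_invp p : inZzp p (p%:R^-1).
Proof.
have [->|p0] := eqVneq p 0%N; first by rewrite invr0; apply: Zz0.
exists 1%N, 1; rewrite expr1 mulVf ?pnatr_eq0 //.
by change (1 = ev p 1); rewrite -polyC1 evC.
Qed.

Lemma Zz_ev_gen p (P : {poly int}) w : inZzp p w -> inZzp p ((map_poly intr P).[w]).
Proof.
move=> Zw; elim/poly_ind: P => [|P c IH]; first by rewrite rmorph0 horner0; apply: Zz0.
rewrite rmorphD rmorphM /= map_polyX map_polyC hornerD hornerMX hornerC.
by apply: ZzD; [apply: ZzM | apply: Zz_int].
Qed.


Lemma zetaX p : (0 < p)%N -> zeta p ^+ p = 1.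
Proof. by move=> p0; rewrite /zeta exprAC rootCK // sqrrN expr1n. Qed.

Lemma zeta_neq1 p : (1 < p)%N -> zeta p != 1.
Proof.
move=> p1; rewrite /zeta sqrf_eq1 negb_or; apply/andP; split.
  apply/eqP => h; have := rootCK (ltnW p1) (-1 : algC); rewrite h expr1n => /eqP.
  by move/eqP => e; have := @ltrN10 algC; rewrite -e ltr10.
apply/eqP => h; have := rootC_lt0 (-1 : algC) p1; rewrite h.
by rewrite ltrN10.
Qed.

Lemma zeta_prim p : prime p -> p.-primitive_root (zeta p).
Proof.
move=> pp; have p1 := prime_gt1 pp; have p0 := ltnW p1.
have [m pm hm] := prim_order_exists p0 (zetaX p0).
case: (m =P 1%N) => [m1 | /eqP m1]; first last.
  case/primeP: pp => _ /(_ m hm) /orP [/eqP e | /eqP e]; first by rewrite e eqxx in m1.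
  by rewrite -{1}e.
move: pm; rewrite m1 => /prim_expr_order; rewrite expr1 => e.
by move: (zeta_neq1 p1); rewrite e eqxx.
Qed.


Lemma inv1w p (w : algC) : (0 < p)%N -> w ^+ p = 1 -> w != 1 -> inZzp p w ->
  inZzp p ((1 - w)^-1).
Proof.
move=> p0 wp w1 Zw.
have sw : \sum_(k < p) w ^+ k = 0.
  have := subrX1 w p; rewrite wp subrr => /esym /eqP; rewrite mulf_eq0 subr_eq0 (negbTE w1) /=.
  by move/eqP.
have w10 : 1 - w != 0 by rewrite subr_eq0 eq_sym.
pose S := \sum_(k < p) \sum_(i < k) w ^+ i.
have hS : p%:R = (1 - w) * S.
  rewrite /S mulr_sumr.
  have -> : \sum_(i < p) (1 - w) * (\sum_(i0 < i) w ^+ i0) = \sum_(i < p) (1 - w ^+ i).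
    apply: eq_bigr => k _; rewrite -opprB mulNr -subrX1 opprB //.
  by rewrite sumrB sw subr0 sumr_const card_ord.
have -> : (1 - w)^-1 = S * p%:R^-1.
  have S0 : S != 0.
    by apply/eqP => e; move: hS; rewrite e mulr0 => /eqP; rewrite pnatr_eq0 => /eqP p00; rewrite p00 in p0.
  by rewrite hS invfM mulrCA mulfV // mulr1.
apply: ZzM; last exact: Zz_invp.
apply: Zz_sum => k; apply: Zz_sum => i; exact: ZzX.
Qed.


Definition Mq (p q : nat) (x : algC) := exists y, inZzp p y /\ x = q%:R * y.

Lemma Mq_Zp p q x : Mq p q x -> inZzp p x.
Proof. by move=> [y [hy ->]]; apply: ZzM => //; apply: Zz_nat. Qed.
Lemma Mq_mk p q y : inZzp p y -> Mq p q (q%:R * y).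
Proof. by move=> hy; exists y. Qed.
Lemma Mq0 p q : Mq p q 0.
Proof. by exists 0; rewrite mulr0; split => //; apply: Zz0. Qed.
Lemma MqD p q x y : Mq p q x -> Mq p q y -> Mq p q (x + y).
Proof. by move=> [a [ha ->]] [b [hb ->]]; exists (a + b); rewrite mulrDr; split => //; apply: ZzD. Qed.
Lemma MqN p q x : Mq p q x -> Mq p q (- x).
Proof. by move=> [a [ha ->]]; exists (- a); rewrite mulrN; split => //; apply: ZzN. Qed.
Lemma MqB p q x y : Mq p q x -> Mq p q y -> Mq p q (x - y).
Proof. by move=> hx hy; apply: MqD => //; apply: MqN. Qed.
Lemma MqMr p q x y : Mq p q x -> inZzp p y -> Mq p q (x * y).
Proof. by move=> [a [ha ->]] hy; exists (a * y); rewrite mulrA; split => //; apply: ZzM. Qed.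
Lemma MqMl p q x y : Mq p q x -> inZzp p y -> Mq p q (y * x).
Proof. by move=> hx hy; rewrite mulrC; apply: MqMr. Qed.
Lemma MqX p q x n : Mq p q x -> (0 < n)%N -> Mq p q (x ^+ n).
Proof.
move=> hx; case: n => // n _; rewrite exprSr; apply: MqMl => //.
by apply: ZzX; apply: Mq_Zp hx.
Qed.
Lemma Mq_sum p q (I : finType) (F : I -> algC) : (forall i, Mq p q (F i)) -> Mq p q (\sum_i F i).
Proof. by move=> hF; apply: (big_ind (Mq p q)) => //; [apply: Mq0 | move=> x y; apply: MqD]. Qed.

Lemma Frob_add p q a b : prime q -> inZzp p a -> inZzp p b ->
  Mq p q ((a + b) ^+ q - a ^+ q - b ^+ q).
Proof.
move=> pq Za Zb; have q1 := prime_gt1 pq.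
case: q pq q1 => // q pq q1.
rewrite exprDn big_ord_recr /= big_ord_recl /= subnn bin0 binn subn0 !expr0 mul1r mulr1 !mulr1n.
have -> : forall x y z : algC, y + x + z - y - z = x.
  by move=> x y z; ring.
apply: Mq_sum => i.
have hi : (0 < bump 0 i < q.+1)%N.
  by rewrite /bump /= add1n ltnS ltn_ord.
have := prime_dvd_bin pq hi => /dvdnP [c hc].
rewrite hc mulrnA -mulr_natl; apply: Mq_mk.
rewrite -mulr_natl; apply: ZzM; first exact: Zz_nat.
by apply: ZzM; apply: ZzX.
Qed.

Lemma Frob_nat p q (n : nat) : prime q -> Mq p q (n%:R ^+ q - n%:R).
Proof.
move=> pq; elim: n => [|n IH]; first by rewrite expr0n /= (gtn_eqF (prime_gt0 pq)) subrr; apply: Mq0.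
have := Frob_add (p:=p) pq (Zz_nat p n) (Zz1 p).
rewrite -natr1 expr1n => h.
have -> : (n%:R + 1) ^+ q - (n%:R + 1) = ((n%:R + 1) ^+ q - n%:R ^+ q - 1) + (n%:R ^+ q - n%:R :> algC).
  by ring.
exact: MqD.
Qed.

Lemma Frob_int p q (c : int) : prime q -> odd q -> Mq p q (c%:~R ^+ q - c%:~R).
Proof.
move=> pq oq; case: c => n; first exact: Frob_nat.
rewrite NegzE rmorphN /= exprNn -signr_odd oq expr1 mulN1r.
have -> : - (n.+1%:~R ^+ q) - - (n.+1%:~R) = - ((n.+1%:R ^+ q) - n.+1%:R :> algC).
  by rewrite opprB addrC opprK.
by apply: MqN; apply: Frob_nat.
Qed.

Lemma Frob_poly p q (w : algC) (P : {poly int}) : prime q -> odd q -> inZzp p w ->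
  Mq p q ((map_poly intr P).[w] ^+ q - (map_poly intr P).[w ^+ q]).
Proof.
move=> pq oq Zw; elim/poly_ind: P => [|P c IH].
  by rewrite rmorph0 !horner0 expr0n /= (gtn_eqF (prime_gt0 pq)) subrr; apply: Mq0.
rewrite rmorphD rmorphM /= map_polyX map_polyC !hornerD !hornerMX !hornerC.
set A := (map_poly intr P).[w]; set B := (map_poly intr P).[w ^+ q].
have ZA : inZzp p A by apply: Zz_ev_gen.
have -> : (A * w + (intr c)) ^+ q - (B * w ^+ q + intr c) =
   ((A * w + (intr c)) ^+ q - (A * w) ^+ q - (intr c) ^+ q) + (A ^+ q - B) * w ^+ q
   + ((intr c) ^+ q - intr c).
  by rewrite exprMn; ring.
apply: MqD; last exact: Frob_int.
apply: MqD; last by apply: MqMr => //; apply: ZzX.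
by apply: Frob_add => //; [apply: ZzM | apply: Zz_int].
Qed.

Lemma Red p q y : prime p -> prime q -> odd q -> p != q -> inZzp p y ->
  Mq p q (y ^+ q) -> Mq p q y.
Proof.
move=> pp pq oq pnq [k [P hP]] My.
have p0 : (p%:R : algC) != 0 by rewrite pnatr_eq0 -lt0n prime_gt0.
set Y := (map_poly intr P).[zeta p] in hP.
have MY : Mq p q (Y ^+ q) by rewrite -hP exprMn -exprM; apply: MqMr => //; apply: ZzX; apply: Zz_nat.
have claim : forall n, Mq p q ((map_poly intr P).[zeta p ^+ (q ^ n.+1)]).
  elim=> [|n IH].
    rewrite expn1.
    have -> : (map_poly intr P).[zeta p ^+ q] = Y ^+ q - (Y ^+ q - (map_poly intr P).[zeta p ^+ q]) by ring.
    by apply: MqB => //; apply: Frob_poly => //; apply: Zzz.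
  rewrite expnSr exprM.
  set X := (map_poly intr P).[zeta p ^+ (q ^ n.+1)] in IH.
  have -> : (map_poly intr P).[(zeta p ^+ (q ^ n.+1)) ^+ q] = X ^+ q - (X ^+ q - (map_poly intr P).[(zeta p ^+ (q ^ n.+1)) ^+ q]) by ring.
  apply: MqB; first exact: MqX (prime_gt0 pq).
  by apply: Frob_poly => //; apply: ZzX; apply: Zzz.
have p1 := prime_gt1 pp.
have := claim (p.-2).
have -> : (p.-2.+1 = p.-1)%N by rewrite -subn2 -subn1 subnSK.
rewrite -(expr_mod _ (zetaX (prime_gt0 pp))).
have cqp : coprime q p by rewrite prime_coprime // dvdn_prime2 // eq_sym.
have := Euler_exp_totient cqp; rewrite totient_prime // => ->.
rewrite modn_small // expr1 -/Y => MY1.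
have -> : y = Y * (p%:R ^+ k)^-1 by rewrite -hP mulfK // expf_neq0.
apply: MqMr => //; rewrite -exprVn; apply: ZzX; apply: Zz_invp.
Qed.

Lemma Frob_sub p q A B : prime q -> inZzp p A -> inZzp p B ->
  Mq p q ((A - B) ^+ q - (A ^+ q - B ^+ q)).
Proof.
move=> pq ZA ZB; have := Frob_add (p:=p) pq (ZzB ZA ZB) ZB; rewrite subrK => h.
have -> : (A - B) ^+ q - (A ^+ q - B ^+ q) = - (A ^+ q - (A - B) ^+ q - B ^+ q) by ring.
exact: MqN.
Qed.

Lemma Mq_powdiff p q A c j : inZzp p A -> inZzp p c ->
  Mq p q ((A + q%:R * c) ^+ j - A ^+ j).
Proof.
move=> ZA Zc; rewrite subrXX (_ : A + q%:R * c - A = q%:R * c); last by ring.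
rewrite -mulrA; apply: Mq_mk; apply: ZzM => //.
apply: Zz_sum => i; apply: ZzM; apply: ZzX => //; apply: ZzD => //; apply: ZzM => //; apply: Zz_nat.
Qed.

Lemma Lift p q A c : (0 < q)%N -> inZzp p A -> inZzp p c ->
  exists c2, inZzp p c2 /\ (A + q%:R * c) ^+ q = A ^+ q + q%:R ^+ 2 * c2.
Proof.
move=> q0 ZA Zc.
have hS : Mq p q (\sum_(i < q) (A + q%:R * c) ^+ (q.-1 - i) * A ^+ i).
  have -> : \sum_(i < q) (A + q%:R * c) ^+ (q.-1 - i) * A ^+ i =
     \sum_(i < q) ((A + q%:R * c) ^+ (q.-1 - i) - A ^+ (q.-1 - i)) * A ^+ i
     + \sum_(i < q) A ^+ (q.-1 - i) * A ^+ i.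
    by rewrite -big_split /=; apply: eq_bigr => i _; rewrite mulrBl subrK.
  apply: MqD.
    by apply: Mq_sum => i; apply: MqMr; [apply: Mq_powdiff | apply: ZzX].
  have -> : \sum_(i < q) A ^+ (q.-1 - i) * A ^+ i = \sum_(i < q) A ^+ q.-1.
    apply: eq_bigr => i _; rewrite -exprD subnK //; rewrite -ltnS prednK //.
  rewrite sumr_const card_ord -mulr_natl; apply: Mq_mk; apply: ZzX.
  done.
have [w [Zw hw]] := hS.
exists (c * w); split; first exact: ZzM.
rewrite -[LHS](subrK (A ^+ q)) subrXX (_ : A + q%:R * c - A = q%:R * c); last by ring.
by rewrite hw addrC expr2; congr (_ + _); ring.
Qed.


Definition hpoly (q : nat) : {poly int} :=
  \poly_(i < q) ((-1) ^+ i * ('C(q, i) %/ q)%:Z).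

Lemma hpoly_eval q (w : algC) : prime q -> odd q ->
  (1 - w) ^+ q = q%:R * (map_poly intr (hpoly q)).[w] + 1 - w ^+ q.
Proof.
move=> pq oq; have q1 := prime_gt1 pq.
have sz : (size (map_poly intr (hpoly q) : {poly algC}) <= q)%N.
  rewrite size_map_inj_poly ?size_poly //; first by apply: intr_inj.
rewrite (horner_coef_wide _ sz).
rewrite -[1 - w]addrC exprD1n big_ord_recr /=.
case: q pq q1 oq sz => // q pq q1 oq sz.
rewrite big_ord_recl /= big_ord_recl /= !expr0 bin0 coef_map coef_poly /= bin0 divn_small //.
rewrite mulr0 rmorph0 mul0r add0r binn mulr1n mulr_sumr.
rewrite exprNn -signr_odd oq expr1 mulN1r.
have E : \sum_(i < q) (- w) ^+ bump 0 i *+ 'C(q.+1, bump 0 i) = \sum_(i < q) q.+1%:R * ((map_poly intr (hpoly q.+1))`_(bump 0 i) * w ^+ bump 0 i).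
  apply: eq_bigr => i _; rewrite coef_map coef_poly /bump /= add1n ltnS ltn_ord.
have hi : (0 < i.+1 < q.+1)%N by apply/andP; split; [|rewrite ltnS ltn_ord].
have := prime_dvd_bin pq hi => /dvdnP [c hc].
rewrite hc mulnK // rmorphM /= rmorphXn /= rmorphN1 exprNn.
  rewrite mulrnA -pmulrn; set x := (-1) ^+ i.+1 * w ^+ i.+1.
  by rewrite -[x *+ c]mulr_natr -[_ *+ q.+1]mulr_natl /x; ring.
by rewrite E mulr1n; ring.
Qed.


Lemma size_map_le (R S : nzRingType) (f : {rmorphism R -> S}) (P : {poly R}) :
  (size (map_poly f P) <= size P)%N.
Proof. by rewrite /map_poly; apply: size_poly. Qed.

Lemma poly_contra p q k (S : {poly int}) : prime p -> prime q -> (q < p)%N ->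
  (map_poly intr (hpoly q)).[zeta p] * p%:R ^+ k <> q%:R * (map_poly intr S).[zeta p].
Proof.
move=> pp pq qp E.
set D : {poly int} := hpoly q * ((p%:Z) ^+ k)%:P - S * (q%:Z)%:P.
have eD : (map_poly intr D : {poly algC}).[zeta p] = 0.
  rewrite /D rmorphB !rmorphM /= !map_polyC hornerD hornerN !hornerM !hornerC /= rmorphXn /= -!pmulrn.
  by rewrite E mulrC subrr.
set Phi := 'Phi_p.
have prim := zeta_prim pp.
have ePhi : (map_poly intr Phi : {poly algC}).[zeta p] = 0.
  rewrite /Phi (Cintr_Cyclotomic prim); apply/rootP.
  by rewrite (root_cyclotomic prim).
have mon : Phi \is monic := Cyclotomic_monic p.
have szPhi : size Phi = p by rewrite size_Cyclotomic totient_prime // prednK // prime_gt0.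
have hdiv := Pdiv.RingMonic.rdivp_eq mon D.
set T := Pdiv.CommonRing.rdivp D Phi in hdiv; set R := Pdiv.CommonRing.rmodp D Phi in hdiv.
have szR : (size R < p)%N by rewrite -szPhi; apply: Pdiv.CommonRing.ltn_rmodpN0; rewrite monic_neq0.
have eR : (map_poly intr R : {poly algC}).[zeta p] = 0.
  by have := eD; rewrite hdiv rmorphD rmorphM /= hornerD hornerM ePhi mulr0 add0r.
have R0 : R = 0.
  apply/eqP; apply: contraT => Rn0.
  have [p0 [hmin _] hroot] := minCpolyP (zeta p).
  have : (p0 %| map_poly intr R)%R.
    rewrite -hroot; apply/rootP; rewrite -map_poly_comp.
    have -> : map_poly (ratr \o intr) R = map_poly intr R :> {poly algC}.
      by apply: eq_map_poly => x /=; exact: ratr_int.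
    exact: eR.
  move/dvdp_leq; rewrite map_poly_eq0_id0; last by rewrite intr_eq0 lead_coef_eq0.
  move=> /(_ Rn0); rewrite size_map_inj_poly //; last exact: intr_inj.
  have : size (minCpoly (zeta p)) = p.
    by rewrite (minCpoly_cyclotomic prim) size_cyclotomic totient_prime // prednK // prime_gt0.
  rewrite hmin size_map_poly => ->.
  by rewrite leqNgt szR.
rewrite R0 addr0 in hdiv.
pose f := (intr : int -> 'F_q).
have fq : ((q%:Z)%:~R : 'F_q) = 0 by rewrite -pmulrn pchar_Fp_0.
have eF : map_poly f D = map_poly f T * map_poly f Phi by rewrite hdiv rmorphM.
have monF : map_poly f Phi \is monic by apply: monic_map.
have szPhiF : size (map_poly f Phi) = p.
  by rewrite size_map_poly_id0 // (monicP mon) /f /=.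
have eD2 : map_poly f D = map_poly f (hpoly q) * (f (p%:Z ^+ k))%:P.
  by rewrite /D rmorphB !rmorphM /= !map_polyC /= fq polyC0 mulr0 subr0.
have szD : (size (map_poly f D) < p)%N.
  rewrite eD2 mulrC mul_polyC (leq_ltn_trans (size_scale_leq _ _)) //.
  by rewrite (leq_ltn_trans (size_map_le _ _)) // (leq_ltn_trans (size_poly _ _)).
have T0 : map_poly f T = 0.
  apply/eqP; apply: contraT => Tn0; move: szD; rewrite eF size_Mmonic // szPhiF.
  by rewrite -(prednK (prime_gt0 pp)) addnS /= ltnS -{2}[p.-1]add0n leq_add2r leqn0 size_poly_eq0 (negbTE Tn0).
have : (map_poly f D)`_1 = 0 by rewrite eF T0 mul0r coef0.
rewrite coef_map /D coefB !coefMC /hpoly coef_poly (prime_gt1 pq) /= bin1 divnn (prime_gt0 pq).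
rewrite rmorphB !rmorphM /= fq mulr0 subr0 expr1 rmorphN1 mulN1r.
move=> /eqP; rewrite mulf_eq0 oppr_eq0 mulr1z oner_eq0 /= rmorphXn /= -pmulrn -natrX -(dvdn_pcharf (pchar_Fp pq)).
by rewrite Euclid_dvdX // dvdn_prime2 // => /andP [/eqP qe _]; rewrite qe ltnn in qp.
Qed.


Lemma descent p q u t : prime p -> prime q -> odd q -> p != q ->
  inZzp p t -> ~ Mq p q t -> u = 1 - q%:R * t -> inZzp p (u^-1) -> u != 0 ->
  forall e Z n c, inZzp p Z -> coprime q n -> inZzp p c ->
  u * Z ^+ q = (q%:R ^+ e) ^+ q * n%:R ^+ q * (1 + q%:R ^+ 2 * c) -> False.
Proof.
move=> pp pq oq pnq Zt nMt ue Zui u0.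
have q0 : (q%:R : algC) != 0 by rewrite pnatr_eq0 -lt0n prime_gt0.
have q1 := prime_gt1 pq.
elim=> [|e IH] Z n c ZZ cqn Zc.
  rewrite expr0 expr1n mul1r => eq1.
  have MZ : Mq p q (Z ^+ q - n%:R ^+ q).
    have -> : Z ^+ q - n%:R ^+ q = q%:R * (t * Z ^+ q + q%:R * (n%:R ^+ q * c)).
      rewrite ue in eq1; apply/eqP; rewrite -subr_eq0.
      rewrite (_ : _ - _ = (1 - q%:R * t) * Z ^+ q - n%:R ^+ q * (1 + q%:R ^+ 2 * c)); last by ring.
      by rewrite eq1 subrr.
    by apply: Mq_mk; apply: ZzD; apply: ZzM => //; try apply: ZzX; try apply: ZzM; try apply: Zz_nat; try apply: ZzX; try apply: Zz_nat.
  have M1 : Mq p q ((Z - n%:R) ^+ q).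
    rewrite (_ : (Z - n%:R) ^+ q = ((Z - n%:R) ^+ q - (Z ^+ q - n%:R ^+ q)) + (Z ^+ q - n%:R ^+ q)); last by ring.
    by apply: MqD => //; apply: Frob_sub => //; apply: Zz_nat.
  have [c1 [Zc1 e1]] := Red pp pq oq pnq (ZzB ZZ (Zz_nat p n)) M1.
  have [c2 [Zc2 e2]] := Lift (p:=p) (prime_gt0 pq) (Zz_nat p n) Zc1.
  have hZ : Z = n%:R + q%:R * c1 by rewrite -e1 addrC subrK.
  rewrite hZ e2 ue in eq1.
  have Mtn : Mq p q (t * n%:R ^+ q).
    have : q%:R * (t * n%:R ^+ q - q%:R * (c2 - q%:R * t * c2 - n%:R ^+ q * c)) = 0.
      rewrite (_ : _ * _ = - ((1 - q%:R * t) * (n%:R ^+ q + q%:R ^+ 2 * c2) - n%:R ^+ q * (1 + q%:R ^+ 2 * c))); last by ring.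
      by rewrite eq1 subrr oppr0.
    move/eqP; rewrite mulf_eq0 (negbTE q0) /= subr_eq0 => /eqP ->.
    have Zq : inZzp p q%:R by apply: Zz_nat.
    have Zn : inZzp p (n%:R ^+ q) by apply: ZzX; apply: Zz_nat.
    by apply: Mq_mk; apply: ZzB; [apply: ZzB => //; apply: ZzM => //; apply: ZzM | apply: ZzM].
  have [a _ ha] := Bezoutl (n ^ q) (prime_gt0 pq).
  move: ha; rewrite (eqP (coprimeXr q cqn)) => /dvdnP [b hb].
  have hb' : 1 + a%:R * n%:R ^+ q = b%:R * q%:R :> algC.
    by move: hb => /(congr1 (fun k : nat => (k%:R : algC))); rewrite /= natrD natrM natrX natrM.
  apply: nMt.
  rewrite (_ : t = t * (1 + a%:R * n%:R ^+ q) - a%:R * (t * n%:R ^+ q)); last by ring.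
  rewrite hb'; apply: MqB; last by apply: MqMl => //; apply: Zz_nat.
  rewrite mulrA mulrC; apply: Mq_mk; apply: ZzM => //; apply: Zz_nat.
move=> eq1.
have hq : (q%:R ^+ e.+1) ^+ q = q%:R * (q%:R ^+ q.-1 * (q%:R ^+ e) ^+ q) :> algC.
  have hq1 : (q%:R : algC) ^+ q = q%:R * q%:R ^+ q.-1 by rewrite -exprS prednK // prime_gt0.
  by rewrite exprS exprMn hq1 mulrA.
have Zq : inZzp p q%:R by apply: Zz_nat.
have MuZ : Mq p q (u * Z ^+ q).
  rewrite eq1 hq -!mulrA; apply: Mq_mk; apply: ZzM; first by apply: ZzX.
  apply: ZzM; first by apply: ZzX; apply: ZzX.
  apply: ZzM; first by apply: ZzX; apply: Zz_nat.
  by apply: ZzD; [exact: Zz1 | apply: ZzM => //; apply: ZzM].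
have MZq : Mq p q (Z ^+ q) by rewrite -(mulKf u0 (Z ^+ q)); apply: MqMl.
have [Z1 [ZZ1 eZ]] := Red pp pq oq pnq ZZ MZq.
apply: (IH Z1 n c) => //.
apply: (mulfI (expf_neq0 q q0)).
move: eq1; rewrite eZ exprMn mulrCA => ->.
by rewrite exprS exprMn -!mulrA.
Qed.


Lemma clear_den p x : inQzeta p x -> exists m : nat, (0 < m)%N /\ inZzp p (m%:R * x).
Proof.
move=> [P ->]; have [Q [a a0 hP]] := rat_poly_scale P.
set Y := (map_poly intr Q : {poly algC}).[zeta p].
have ZY : inZzp p Y by apply: Zz_ev_gen; apply: Zzz.
have hx : (map_poly ratr P).[zeta p] = (a%:~R)^-1 * Y.
  rewrite hP map_polyZ hornerZ fmorphV rmorph_int -map_poly_comp /Y; congr (_ * _).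
  by congr (_.[_]); apply: eq_map_poly => w /=; exact: ratr_int.
have aC : (a%:~R : algC) != 0 by rewrite intr_eq0.
rewrite hx; case: a a0 aC {hP hx} => n a0 aC.
  exists n; split; first by rewrite lt0n; apply: contraNneq a0 => ->.
  by rewrite -[n%:R]/((Posz n)%:~R : algC) mulVKf.
exists n.+1; split => //.
rewrite (_ : n.+1%:R = - (Negz n)%:~R); last by rewrite NegzE rmorphN opprK.
by rewrite mulNr mulVKf //; apply: ZzN.
Qed.

Unset Implicit Arguments.

(* C = C' (= C ∩ E') is expressed as: every element of C lies in E'. *)
Theorem mainTheorem17 (p q : nat) :
  prime p -> prime q -> odd p -> odd q -> p != q ->
  (forall u : algC, inC p u -> inE' p q u) ->
  (p < q)%N.
Proof.
move=> pp pq op oq pnq H.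
case: (ltngtP p q) => // [qp | pe]; last by rewrite pe eqxx in pnq.
exfalso.
have p0 := prime_gt0 pp; have q0 := prime_gt0 pq.
have prim := zeta_prim pp.
have zp := zetaX p0; have z1 := zeta_neq1 (prime_gt1 pp).
have zq1 : zeta p ^+ q != 1.
  by rewrite -(prim_order_dvd prim) gtnNdvd.
have Ziv := inv1w p0 zp z1 (Zzz p).
have Ziq : inZzp p ((1 - zeta p ^+ q)^-1).
  by apply: inv1w => //; [rewrite exprAC zp expr1n | apply: ZzX; apply: Zzz].
have nz1 : 1 - zeta p != 0 by rewrite subr_eq0 eq_sym.
have nzq : 1 - zeta p ^+ q != 0 by rewrite subr_eq0 eq_sym.
set iv := (1 - zeta p)^-1 in Ziv.
set u := (1 - zeta p ^+ q) / (1 - zeta p ^+ 1) * 1 * (1 - zeta p) ^ (1 - q%:Z).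
have uE : u = (1 - zeta p ^+ q) * iv ^+ q.
  rewrite /u expr1 mulr1 (_ : 1 - q%:Z = - (q.-1)%:Z); last first.
    by rewrite -{1}(prednK q0) -addn1 PoszD opprD addrCA subrr addr0.
  rewrite -exprnN -mulrA -invfM -exprS prednK // exprVn //.
have Zu : inZzp p u by rewrite uE; apply: ZzM; [apply: ZzB; [apply: Zz1 | apply: ZzX; apply: Zzz] | apply: ZzX].
set v := (1 - zeta p) ^+ q * (1 - zeta p ^+ q)^-1.
have Zv : inZzp p v by apply: ZzM => //; apply: ZzX; apply: ZzB; [apply: Zz1 | apply: Zzz].
have uv : u * v = 1.
  by rewrite uE /v /iv exprVn -mulrA mulKf ?mulfV // expf_neq0.
have hu : inC p u.
  split; first by split => //; exists v.
  exists q, 1%N, 1, (1 - q%:Z); split; first by rewrite expr1.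
  by split => //; exists 1%N.
have [_ [x [b [g [hx [_ [Zb [Zg [[d [e [Zd [Ze hbd]]]] eqx]]]]]]]]] := H u hu.
set hz := (map_poly intr (hpoly q) : {poly algC}).[zeta p].
have Zhz : inZzp p hz by apply: Zz_ev_gen; apply: Zzz.
set t := hz * iv ^+ q.
have Zt : inZzp p t by apply: ZzM => //; apply: ZzX.
have hB : (1 - zeta p) ^+ q * iv ^+ q = 1 by rewrite -exprMn mulfV ?expr1n.
have ue : u = 1 - q%:R * t.
  rewrite uE /t (_ : 1 - zeta p ^+ q = (1 - zeta p) ^+ q - q%:R * hz); last first.
    by rewrite (hpoly_eval _ pq oq) /hz; ring.
  by rewrite mulrBl hB mulrA.
have nMt : ~ Mq p q t.
  move=> [s [Zs es]].
  have Zs' : inZzp p (s * (1 - zeta p) ^+ q).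
    by apply: ZzM => //; apply: ZzX; apply: ZzB; [apply: Zz1 | apply: Zzz].
  have [k [S hS]] := Zs'.
  apply: (poly_contra (k:=k) (S:=S) pp pq qp).
  have -> : (map_poly intr (hpoly q)).[zeta p] = q%:R * (s * (1 - zeta p) ^+ q).
    rewrite -/hz (_ : hz = t * (1 - zeta p) ^+ q); last by rewrite /t -mulrA [iv ^+ q * _]mulrC hB mulr1.
    by rewrite es mulrA.
  by rewrite -mulrA hS.
have u0 : u != 0 by apply/eqP => u0; move: uv; rewrite u0 mul0r => /eqP; rewrite eq_sym oner_eq0.
have Zui : inZzp p (u^-1).
  by rewrite (_ : u^-1 = v) // -[LHS]mulr1 -uv mulKf.
have [m [m0 Zmx]] := clear_den hx.
have [c2 [Zc2 e2]] := Lift (p:=p) q0 (Zz1 p) (ZzM (Zz_nat p q) Ze).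
have e3 : (b * d) ^+ q = 1 + q%:R ^+ 2 * c2.
  by rewrite hbd (_ : q%:R ^+ 2 * e = q%:R * (q%:R * e)) ?e2 ?expr1n // expr2 mulrA.
have keq : u * (m%:R * x * d) ^+ q = m%:R ^+ q * (1 + q%:R ^+ 2 * (c2 + g * d ^+ q)).
  rewrite !exprMn (_ : u * (_ * _ * _) = m%:R ^+ q * ((u * x ^+ q) * d ^+ q)); last by ring.
  rewrite eqx; congr (_ * _); rewrite mulrDl -exprMn e3; ring.
have [n cqn hm] := pfactor_coprime pq m0.
have Zc : inZzp p (c2 + g * d ^+ q) by apply: ZzD => //; apply: ZzM => //; apply: ZzX.
apply: (descent pp pq oq pnq Zt nMt ue Zui u0 (e := logn q m) (ZzM Zmx Zd) cqn Zc).
by rewrite keq {1}hm natrM natrX exprMn [n%:R ^+ q * _]mulrC.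
Qed.
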